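(* Let the universe be $\mathbb{Z}$ and let $\mathcal{C}=\{\mathbb{Z}\setminus\{i\}\}_{i\in\mathbb{Z}}$. There is no algorithm that non-uniformly generates from $\mathcal{C}$ and whose generation times form a Pareto-optimal sequence.
   Context: Index the languages of $\mathcal{C}$ as $L_1,L_2,\ldots$ by any enumeration without repetition. An enumeration of a language $L$ is a sequence $x_1,x_2,\ldots$ with every $x_t\in L$ and every $x\in L$ equal to some $x_t$. A generating algorithm at each time $t\ge1$ receives $x_1,\ldots,x_t$ and outputs $z_t$; $S_t$ is the set of distinct strings among $x_1,\ldots,x_t$. An algorithm $\mathcal{G}$ non-uniformly generates from $\mathcal{C}$ if for every $i$ there is a finite $t(L_i)$ such that for every enumeration of $L_i$, $z_t\in L_i\setminus S_t$ whenever $|S_t|\ge t(L_i)$; its generation time $t_{\mathcal{G}}(L_i)$ is the least such value ($\infty$ if none). A sequence $t(L_1),t(L_2),\ldots$ is Pareto-optimal if every algorithm $\mathcal{G}$ that non-uniformly generates from $\mathcal{C}$ and satisfies $t_{\mathcal{G}}(L_i)<t(L_i)$ for some $i$ also satisfies $t_{\mathcal{G}}(L_j)>t(L_j)$ for some other $j$. *)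

(* Defs.v *)
From Stdlib Require Import ZArith List Arith.
Import ListNotations.
Open Scope Z_scope.

Definition language := Z -> Prop.

Definition Lang (i : Z) : language := fun x => x <> i.

Definition algorithm := list Z -> Z.

(* An enumeration of L (0-based: x 0, x 1, ... stands for x_1, x_2, ...). *)
Definition enumeration (L : language) (x : nat -> Z) : Prop :=
  (forall t, L (x t)) /\ (forall y, L y -> exists t, x t = y).

Definition prefix (x : nat -> Z) (t : nat) : list Z := map x (seq 0 t).

Definition card_S (x : nat -> Z) (t : nat) : nat :=
  length (nodup Z.eq_dec (prefix x t)).

Definition gen_ok (G : algorithm) (L : language) (T : nat) : Prop :=
  forall x, enumeration L x ->
  forall t : nat, (1 <= t)%nat -> (T <= card_S x t)%nat ->
    L (G (prefix x t)) /\ ~ In (G (prefix x t)) (prefix x t).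

Definition nonuniform_generates (G : algorithm) : Prop :=
  forall i, exists T, gen_ok G (Lang i) T.

Definition is_gen_time (G : algorithm) (L : language) (T : nat) : Prop :=
  gen_ok G L T /\ forall T', gen_ok G L T' -> (T <= T')%nat.

(* Pareto-optimality of a sequence t(L_i), i in Z. Every non-uniform generator
   has all generation times finite, so they are described by is_gen_time. *)
Definition pareto_optimal (tseq : Z -> nat) : Prop :=
  forall G', nonuniform_generates G' ->
  forall i Ti, is_gen_time G' (Lang i) Ti -> (Ti < tseq i)%nat ->
  exists j Tj, j <> i /\ is_gen_time G' (Lang j) Tj /\ (tseq j < Tj)%nat.

(* Main.v *)
Require Import Defs.
From Stdlib Require Import ZArith List Arith Lia ClassicalEpsilon.
Import ListNotations.
Open Scope Z_scope.

Definition gz (k:nat) : Z := let z := Z.of_nat k in if Z.eqb (z mod 2) 0 then z/2 else -(z/2) - 1.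
Lemma gz_surj : forall y, exists k, gz k = y.
Proof.
  intro y. unfold gz. destruct (Z_le_gt_dec 0 y).
  - exists (Z.to_nat (2*y)). rewrite Z2Nat.id by lia.
    cbv zeta.
    assert (H1: 2*y mod 2 = 0) by (Z.div_mod_to_equations; lia).
    assert (H2: 2*y / 2 = y) by (Z.div_mod_to_equations; lia).
    rewrite H1, H2. reflexivity.
  - exists (Z.to_nat (2*(-y-1)+1)). rewrite Z2Nat.id by lia.
    cbv zeta.
    assert (H1: (2*(-y-1)+1) mod 2 = 1) by (Z.div_mod_to_equations; lia).
    assert (H2: (2*(-y-1)+1) / 2 = -y-1) by (Z.div_mod_to_equations; lia).
    rewrite H1, H2. simpl. lia.
Qed.

Definition cardl (u : list Z) : nat := length (nodup Z.eq_dec u).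

Lemma map_nth_self (u : list Z) : map (fun n => nth n u 0) (seq 0 (length u)) = u.
Proof.
  induction u as [|a u IH]; simpl; auto.
  f_equal. rewrite <- seq_shift, map_map. simpl. exact IH.
Qed.

Lemma list_to_gen G j T :
  (forall u, u <> [] -> (forall y, In y u -> y <> j) -> (T <= cardl u)%nat ->
     G u <> j /\ ~ In (G u) u) -> gen_ok G (Lang j) T.
Proof.
  intros H x [Hx _] t Ht HT. apply H; auto.
  - destruct t; [lia|]. unfold prefix. simpl. discriminate.
  - intros y Hy. unfold prefix in Hy. apply in_map_iff in Hy.
    destruct Hy as [n [<- _]]. apply Hx.
Qed.

Lemma gen_to_list G j T : gen_ok G (Lang j) T ->
  forall u, u <> [] -> (forall y, In y u -> y <> j) -> (T <= cardl u)%nat ->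
     G u <> j /\ ~ In (G u) u.
Proof.
  intros H u Hne Hu HT.
  set (e := fun k => if Z.eq_dec (gz k) j then j + 1 else gz k).
  set (x := fun n => if Nat.ltb n (length u) then nth n u 0 else e (n - length u)%nat).
  assert (Hp : prefix x (length u) = u).
  { unfold prefix. rewrite <- (map_nth_self u) at 2. apply map_ext_in.
    intros n Hn. apply in_seq in Hn. unfold x.
    replace (Nat.ltb n (length u)) with true; auto. symmetry. apply Nat.ltb_lt. lia. }
  assert (He : enumeration (Lang j) x).
  { split.
    - intros t. unfold x, Lang. destruct (Nat.ltb t (length u)) eqn:E.
      + apply Hu. apply nth_In. apply Nat.ltb_lt. exact E.
      + unfold e. destruct (Z.eq_dec (gz (t - length u)%nat) j); lia.
    - intros y Hy. destruct (gz_surj y) as [k Hk]. exists (length u + k)%nat.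
      unfold x. replace (Nat.ltb (length u + k) (length u)) with false
        by (symmetry; apply Nat.ltb_ge; lia).
      replace (length u + k - length u)%nat with k by lia.
      unfold e. rewrite Hk. destruct (Z.eq_dec y j); [contradiction|auto]. }
  assert (Hl : (1 <= length u)%nat) by (destruct u; [congruence|simpl; lia]).
  specialize (H x He (length u) Hl). unfold card_S in H. rewrite Hp in H. apply H. exact HT.
Qed.

Lemma fresh (s : list Z) : exists j, ~ In j s.
Proof.
  exists (fold_right (fun a b => Z.abs a + b) 1 s).
  assert (forall y, In y s -> y < fold_right (fun a b => Z.abs a + b) 1 s).
  { induction s as [|a s IH]; simpl; [tauto|].
    assert (0 < fold_right (fun a b => Z.abs a + b) 1 s).
    { clear IH. induction s; simpl; lia. }
    intros y [<-|Hy]; [lia|]. specialize (IH y Hy). lia. }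
  intro Hin. specialize (H _ Hin). lia.
Qed.

Lemma unbounded G tG :
  (forall i, gen_ok G (Lang i) (tG i)) ->
  forall s c, exists z, ~ In z s /\ (c <= tG z)%nat.
Proof.
  intros Hg s c.
  set (u := s ++ map Z.of_nat (seq 0 (S c))).
  assert (Hc : (S c <= cardl u)%nat).
  { unfold cardl. replace (S c) with (length (map Z.of_nat (seq 0 (S c))))
      by (rewrite length_map, length_seq; auto).
    apply NoDup_incl_length.
    - apply NoDup_map_NoDup_ForallPairs; [intros a b _ _; lia | apply seq_NoDup].
    - intros y Hy. apply nodup_In. unfold u. apply in_or_app. right. exact Hy. }
  assert (Hne : u <> []).
  { unfold u. destruct s; simpl; discriminate. }
  assert (Hsu : forall y, In y s -> In y u) by (intros; unfold u; apply in_or_app; auto).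
  destruct (in_dec Z.eq_dec (G u) u) as [Hin|Hout].
  - destruct (fresh u) as [j Hj]. exists j. split; [intro; apply Hj; auto|].
    destruct (Nat.le_gt_cases (tG j) (cardl u)) as [Hle|Hgt]; [|lia].
    exfalso. destruct (gen_to_list _ _ _ (Hg j) u Hne) as [_ H2]; auto.
    intros y Hy ->. contradiction.
  - exists (G u). split; [intro; apply Hout; auto|].
    destruct (Nat.le_gt_cases (tG (G u)) (cardl u)) as [Hle|Hgt]; [|lia].
    exfalso. destruct (gen_to_list _ _ _ (Hg (G u)) u Hne) as [H1 _]; auto.
    intros y Hy ->. contradiction.
Qed.

Theorem mainTheorem4 :
  ~ exists (G : algorithm) (tG : Z -> nat),
      nonuniform_generates G /\
      (forall i, is_gen_time G (Lang i) (tG i)) /\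
      pareto_optimal tG.
Proof.
  intros [G [tG [_ [Ht Hp]]]].
  assert (Hg : forall i, gen_ok G (Lang i) (tG i)) by (intro i; apply Ht).
  destruct (unbounded G tG Hg [] 1) as [i [_ Hi]].
  assert (Hz : forall u : list Z, exists z, ~ In z (i :: u) /\ (tG i <= tG z)%nat)
    by (intro u; apply (unbounded G tG Hg)).
  set (f := fun u => proj1_sig (constructive_indefinite_description _ (Hz u))).
  assert (Hf : forall u, ~ In (f u) (i :: u) /\ (tG i <= tG (f u))%nat)
    by (intro u; unfold f; destruct (constructive_indefinite_description _ (Hz u)); auto).
  set (G' := fun u => if in_dec Z.eq_dec i u then G u
                      else if in_dec Z.eq_dec (G u) (i :: u) then f u else G u).
  assert (Hi0 : gen_ok G' (Lang i) 0).
  { apply list_to_gen. intros u Hne Hu _.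
    assert (Hiu : ~ In i u) by (intro H; exact (Hu i H eq_refl)).
    unfold G'. destruct (in_dec Z.eq_dec i u); [contradiction|].
    destruct (in_dec Z.eq_dec (G u) (i :: u)) as [Hin|Hout].
    - destruct (Hf u) as [H1 _]. split; intro; apply H1; simpl; auto.
    - split; intro; apply Hout; simpl; auto. }
  assert (Hj : forall j, j <> i -> gen_ok G' (Lang j) (tG j)).
  { intros j Hji. apply list_to_gen. intros u Hne Hu Hc.
    unfold G'. destruct (in_dec Z.eq_dec i u) as [Hiu|Hiu].
    - apply (gen_to_list _ _ _ (Hg j)); auto.
    - destruct (in_dec Z.eq_dec (G u) (i :: u)) as [Hin|Hout].
      + destruct (Hf u) as [H1 H2]. split; [|intro; apply H1; simpl; auto].
        intro Heq. rewrite Heq in H2.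
        (* G fails on u for L_i, so cardl u < tG i *)
        destruct (Nat.le_gt_cases (tG i) (cardl u)) as [Hle|Hgt]; [|lia].
        destruct (gen_to_list _ _ _ (Hg i) u Hne) as [K1 K2]; auto.
        { intros y Hy ->. contradiction. }
        destruct Hin as [Hin|Hin]; auto.
      + apply (gen_to_list _ _ _ (Hg j)); auto. }
  assert (Hnu : nonuniform_generates G').
  { intro j. destruct (Z.eq_dec j i) as [->|Hji]; [exists 0%nat; auto | exists (tG j); auto]. }
  destruct (Hp G' Hnu i 0%nat) as [j [Tj [Hji [[_ HTj] Hlt]]]].
  - split; [exact Hi0 | intros; lia].
  - lia.
  - specialize (HTj _ (Hj j Hji)). lia.
Qed.
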